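(* Let $k$ be an algebraically closed field and let $R = k\{\widehat{X}_1,\dots,\widehat{X}_s\}/\langle \widehat f_1,\widehat f_2,\dots\rangle$ be a finitely generated $k$-algebra satisfying a polynomial identity, with $M$, $\pi$, $T$, $\Psi$ as in the context. Then $\Psi:\operatorname{Prim} R\to\operatorname{Max} T$ is open and closed onto its image. More precisely, for every ideal $I$ of $R$, setting $J = (M\pi(I)M)\cap T$, $$\Psi(V_R(I)) = \operatorname{Image}\Psi\cap V_T(J),\qquad \Psi(W_R(I)) = \operatorname{Image}\Psi\cap W_T(J),$$ where $W_R(I)$ and $W_T(J)$ denote the complements of $V_R(I)$ in $\operatorname{Prim} R$ and of $V_T(J)$ in $\operatorname{Max} T$.
   Context: All algebra homomorphisms are unital. $X_\ell$ denotes the image of $\widehat X_\ell$ in $R$. Let $d$ be a positive integer such that every irreducible representation of $R$ has $k$-dimension at most $d$, and let $N$ be a common multiple of $1,2,\dots,d$. Let $\widehat C = k[\widehat x^{(\ell)}_{ij} : 1\le i,j\le N,\ 1\le \ell\le s]$ and let $\widehat\pi$ be the $k$-algebra homomorphism from the free algebra to $M_N(\widehat C)$ sending $\widehat X_\ell$ to the generic matrix $(\widehat x^{(\ell)}_{ij})$. Let $\operatorname{Rel}$ be the ideal of $\widehat C$ generated by all entries of all $\widehat\pi(\widehat f_i)$; set $C=\widehat C/\operatorname{Rel}$, $M=M_N(C)$ (with $C$ identified with the scalar matrices), $x^{(\ell)}_{ij}$ the image of $\widehat x^{(\ell)}_{ij}$, and $\pi:R\to M$ the induced homomorphism $X_\ell\mapsto(x^{(\ell)}_{ij})$.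 Let $T\subseteq C$ be the $k$-subalgebra generated by the coefficients of the characteristic polynomials of the elements of $\pi(R)$. For a representation $\rho:R\to M_N(k)$ let $\widetilde\rho:M\to M_N(k)$ be the unique $k$-algebra homomorphism that is the identity on $M_N(k)\subseteq M$ with $\widetilde\rho\circ\pi=\rho$. For a representation $\rho:R\to M_m(k)$ with $m\mid N$, let $\rho_N(r)=\operatorname{diag}(\rho(r),\dots,\rho(r))$ ($N/m$ blocks). For a primitive ideal $P$ of $R$ choose an irreducible representation $\rho:R\to M_m(k)$ with kernel $P$ and set $\Psi(P)=\ker(\widetilde{\rho_N}|_T)\in\operatorname{Max}T$; this depends only on $P$ and gives an injection $\Psi:\operatorname{Prim}R\to\operatorname{Max}T$. $\operatorname{Prim}R$ (primitive ideals) and $\operatorname{Max}T$ (maximal ideals) carry the Jacobson/Zariski topologies: closed sets $V_R(I)=\{P: P\supseteq I\}$ and $V_T(J)=\{\mathfrak m:\mathfrak m\supseteq J\}$. *)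

(* Defs.v *)
From HB Require Import structures.
From Stdlib Require Import ClassicalEpsilon.
From mathcomp Require Import all_boot all_order all_algebra.
From mathcomp Require Import ring_quotient generic_quotient.
From mathcomp Require Import finmap monalg.

Set Implicit Arguments.
Unset Strict Implicit.
Unset Printing Implicit Defensive.

Import GRing.Theory.
Local Open Scope ring_scope.
Local Open Scope quotient_scope.

(* The free (noncommutative) k-algebra k{X_1,...,X_s}: the monoid       *)
(* algebra of the free monoid on 'I_s.                                  *)
Definition FA (k : fieldType) (s : nat) := {malg k[{fmonom 'I_s}]}.

Definition ncX (k : fieldType) (s : nat) (l : 'I_s) : FA k s := << fmu l >>.

Definition nceval (k : fieldType) (s : nat) (A : pzRingType) (phi : k -> A)
    (a : 'I_s -> A) (p : FA k s) : A :=
  \sum_(w <- msupp p) phi p@_w * \prod_(i <- (w : seq 'I_s)) a i.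

Section RSide.
Variables (k : fieldType) (R : algType k).

Definition alg_eval (s : nat) (a : 'I_s -> R) (p : FA k s) : R :=
  nceval (fun c : k => c%:A) a p.

Definition two_sided_ideal (I : R -> Prop) : Prop :=
  [/\ I 0, (forall x y, I x -> I y -> I (x + y)),
      (forall r x, I x -> I (r * x)) & (forall r x, I x -> I (x * r))].

Definition is_PI : Prop :=
  exists (m : nat) (p : FA k m), p != 0 /\
    forall a : 'I_m -> R, alg_eval a p = 0.

Definition simple_module (V : lmodType R) : Prop :=
  (exists v : V, v <> 0) /\
  forall U : V -> Prop, U 0 -> (forall u v, U u -> U v -> U (u + v)) ->
    (forall (r : R) v, U v -> U (r *: v)) ->
    (forall v, U v -> v = 0) \/ (forall v, U v).

Definition kdim_le (V : lmodType R) (d : nat) : Prop :=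
  exists v : 'I_d -> V, forall x : V, exists c : 'I_d -> k,
    x = \sum_(i < d) ((c i)%:A : R) *: v i.

Definition primitive_ideal (P : R -> Prop) : Prop :=
  exists V : lmodType R, simple_module V /\
    forall r : R, P r <-> (forall v : V, r *: v = 0).

Definition representation (m : nat) (rho : R -> 'M[k]_m) : Prop :=
  [/\ (forall x y, rho (x + y) = rho x + rho y),
      (forall x y, rho (x * y) = rho x *m rho y),
      rho 1 = 1%:M & (forall (a : k) x, rho (a *: x) = a *: rho x)].

Definition irreducible_rep (m : nat) (rho : R -> 'M[k]_m) : Prop :=
  [/\ representation rho, (0 < m)%N &
      forall U : 'M[k]_m, (forall r, (U *m rho r <= U)%MS) ->
        (U == (0 : 'M[k]_m))%MS \/ row_full U].

(* rho_N = diag(rho, ..., rho)  (N/m blocks), for m | N *)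
Definition blockdiag_rep (N m : nat) (rho : R -> 'M[k]_m) : R -> 'M[k]_N :=
  fun r => \matrix_(i < N, j < N)
    match (insub (i %% m)%N : option 'I_m), (insub (j %% m)%N : option 'I_m) with
    | Some a, Some b => if (i %/ m == j %/ m)%N then rho r a b else 0
    | _, _ => 0
    end.

End RSide.

Definition pbool (P : Prop) : bool :=
  if excluded_middle_informative P then true else false.

Lemma pboolP (P : Prop) : reflect P (pbool P).
Proof. by rewrite /pbool; case: excluded_middle_informative => h; constructor. Qed.

Section Generic.
Variables (k : fieldType) (s N : nat) (f : nat -> FA k s).

Definition Chat := {malg k[{cmonom ('I_s * 'I_N * 'I_N)%type}]}.

Definition xhat (l : 'I_s) (i j : 'I_N) : Chat := << ucm (l, i, j) >>.

Definition generic_matrix (l : 'I_s) : 'M[Chat]_N := \matrix_(i, j) xhat l i j.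

Definition pihat (p : FA k s) : 'M[Chat]_N :=
  nceval (fun c : k => (c%:MP : Chat)%:M) generic_matrix p.

Definition Rel (c : Chat) : Prop :=
  forall S : Chat -> Prop, S 0 -> (forall x y, S x -> S y -> S (x + y)) ->
    (forall a x, S x -> S (a * x)) ->
    (forall n i j, S (pihat (f n) i j)) -> S c.

Lemma Rel0 : Rel 0. Proof. by move=> S. Qed.
Lemma RelD x y : Rel x -> Rel y -> Rel (x + y).
Proof. move=> hx hy S S0 SD SM Sg; exact: (SD _ _ (hx S S0 SD SM Sg) (hy S S0 SD SM Sg)). Qed.
Lemma RelM a x : Rel x -> Rel (a * x).
Proof. move=> hx S S0 SD SM Sg; exact: (SM _ _ (hx S S0 SD SM Sg)). Qed.

(* zero ideal when Rel is not proper.          *)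
Definition Relb : Chat -> bool :=
  fun c => if pbool (Rel 1) then c == 0 else pbool (Rel c).

Lemma Relb_idealr : idealr_closed Relb.
Proof.
have E c : (c \in Relb) = (if pbool (Rel 1) then c == 0 else pbool (Rel c)) by [].
case h1: (pbool (Rel 1)).
  split.
  - by rewrite E h1.
  - by rewrite E h1 oner_eq0.
  - by move=> a u v; rewrite !E h1 => /eqP -> /eqP ->; rewrite mulr0 addr0.
split.
- by rewrite E h1; apply/pboolP; apply: Rel0.
- by rewrite E h1.
- move=> a u v; rewrite !E h1 => /pboolP hu /pboolP hv; apply/pboolP.
  by apply: RelD => //; apply: RelM.
Qed.

HB.instance Definition _ := isIdealr.Build Chat Relb Relb_idealr.

Definition Relideal : idealr Chat := Relb.
Definition C := {ideal_quot Relideal}.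

Definition inC (a : k) : C := \pi_C (a%:MP : Chat).

Definition pibar (p : FA k s) : 'M[C]_N := map_mx (\pi_C) (pihat p).

End Generic.

Section Main.
Variables (k : fieldType) (s : nat) (R : algType k) (X : 'I_s -> R)
          (f : nat -> FA k s) (N : nat).

Local Notation C := (C N f).
Local Notation inC := (@inC k s N f).

Definition piR (r : R) : 'M[C]_N :=
  @pibar k s N f (epsilon (inhabits 0) (fun p : FA k s => alg_eval X p = r)).

Definition Tsub (c : C) : Prop :=
  forall S : C -> Prop, (forall a, S (inC a)) ->
    (forall x y, S x -> S y -> S (x + y)) ->
    (forall x y, S x -> S y -> S (x * y)) ->
    (forall (r : R) (i : nat), S (char_poly (piR r))`_i) -> S c.

Definition T_ideal (m : C -> Prop) : Prop :=
  [/\ (forall c, m c -> Tsub c), m 0,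
      (forall x y, m x -> m y -> m (x + y)) &
      (forall t c, Tsub t -> m c -> m (t * c))].

Definition maximal_T (m : C -> Prop) : Prop :=
  [/\ T_ideal m, ~ m 1 &
      forall m', T_ideal m' -> (forall c, m c -> m' c) -> ~ m' 1 ->
        forall c, m' c -> m c].

Definition MpiIM (I : R -> Prop) (A : 'M[C]_N) : Prop :=
  exists n (a : 'I_n -> 'M[C]_N) (x : 'I_n -> R) (b : 'I_n -> 'M[C]_N),
    (forall i, I (x i)) /\ A = \sum_(i < n) a i *m piR (x i) *m b i.

(* J = (M pi(I) M) ∩ T, with C identified with the scalar matrices *)
Definition Jof (I : R -> Prop) (c : C) : Prop := Tsub c /\ MpiIM I c%:M.

Definition rho_tilde (sigma : R -> 'M[k]_N) : 'M[C]_N -> 'M[k]_N :=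
  epsilon (inhabits (fun _ => 0)) (fun g : 'M[C]_N -> 'M[k]_N =>
    (forall A B, g (A + B) = g A + g B) /\
    (forall A B, g (A *m B) = g A *m g B) /\
    g 1%:M = 1%:M /\
    (forall a A, g (inC a *: A) = a *: g A) /\
    (forall A : 'M[k]_N, g (map_mx inC A) = A) /\
    (forall r, g (piR r) = sigma r)).

Definition chosen_irrep (P : R -> Prop) : {m : nat & R -> 'M[k]_m} :=
  epsilon (inhabits (existT (fun m => R -> 'M[k]_m) 0%N (fun _ => 0)))
    (fun mr => irreducible_rep (projT2 mr) /\
       forall r, P r <-> projT2 mr r = 0).

Definition Psi (P : R -> Prop) : C -> Prop :=
  fun c => Tsub c /\
    rho_tilde (blockdiag_rep N (projT2 (chosen_irrep P))) c%:M = 0.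

Definition V_R (I : R -> Prop) (P : R -> Prop) : Prop :=
  primitive_ideal P /\ (forall r, I r -> P r).
Definition W_R (I : R -> Prop) (P : R -> Prop) : Prop :=
  primitive_ideal P /\ ~ (forall r, I r -> P r).
Definition V_T (J : C -> Prop) (m : C -> Prop) : Prop :=
  maximal_T m /\ (forall c, J c -> m c).
Definition W_T (J : C -> Prop) (m : C -> Prop) : Prop :=
  maximal_T m /\ ~ (forall c, J c -> m c).

Definition image_Psi (m : C -> Prop) : Prop :=
  exists P, primitive_ideal P /\ Psi P = m.

End Main.

(* Main.v *)
Require Import Defs.
From HB Require Import structures.
From Stdlib Require Import ClassicalEpsilon Classical.
From mathcomp Require Import all_boot all_order all_algebra.
From mathcomp Require Import ring_quotient generic_quotient.
From mathcomp Require Import finmap monalg.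
From Stdlib Require Import Lia.
From mathcomp Require Import zify.
Set Implicit Arguments.
Unset Strict Implicit.
Unset Printing Implicit Defensive.
Import GRing.Theory.
Local Open Scope ring_scope.
Local Open Scope quotient_scope.

Lemma subspace_mx (K : fieldType) n (S : 'rV[K]_n -> Prop) :
  S 0 -> (forall u v, S u -> S v -> S (u + v)) -> (forall a u, S u -> S (a *: u)) ->
  exists p (B : 'M[K]_(p, n)), forall u, S u <-> (u <= B)%MS.
Proof.
move=> S0 SD SZ.
pose Q r := exists p (B : 'M[K]_(p, n)), (forall w, S (w *m B)) /\ \rank B = r.
have Q0 : exists r, pbool (Q r).
  exists 0%N; apply/pboolP; exists 0%N, 0; split; first by move=> w; rewrite mulmx0.
  by rewrite mxrank0.
have Qb : forall r, pbool (Q r) -> (r <= n)%N.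
  by move=> r /pboolP [p [B [_ <-]]]; exact: rank_leq_col.
have [r /pboolP [p [B [SB rB]]] rmax] := ex_maxnP Q0 Qb.
exists p, B => u; split; last first.
  by case/submxP=> D ->.
move=> Su; apply: contraT => nuB.
have : (B < col_mx B u)%MS.
  rewrite ltmxE; apply/andP; split.
    by rewrite -addsmxE addsmxSl.
  apply: contra nuB => h; apply: submx_trans h.
  by rewrite -addsmxE addsmxSr.
rewrite ltmxErank => /andP [_ hlt].
have : (\rank (col_mx B u) <= r)%N.
  apply: rmax; apply/pboolP; exists (p + 1)%N, (col_mx B u); split => //.
  move=> w; rewrite -[w]hsubmxK mul_row_col; apply: SD; first exact: SB.
  by rewrite [rsubmx w]mx11_scalar mul_scalar_mx; exact: SZ.
by rewrite leqNgt -rB hlt.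
Qed.

Section RepBasics.
Variables (k : fieldType) (R : algType k) (m : nat) (rho : R -> 'M[k]_m).
Hypothesis hrep : representation rho.

Lemma rep_add x y : rho (x + y) = rho x + rho y. Proof. by case: hrep. Qed.
Lemma rep_mul x y : rho (x * y) = rho x *m rho y. Proof. by case: hrep. Qed.
Lemma rep_one : rho 1 = 1%:M. Proof. by case: hrep. Qed.
Lemma rep_scale a x : rho (a *: x) = a *: rho x. Proof. by case: hrep. Qed.
Lemma rep_zero : rho 0 = 0.
Proof. by rewrite -[0 : R](scale0r 0) rep_scale scale0r. Qed.
Lemma rep_opp x : rho (- x) = - rho x.
Proof. by rewrite -scaleN1r rep_scale scaleN1r. Qed.
Lemma rep_sum I (r : seq I) (P : pred I) (F : I -> R) :
  rho (\sum_(i <- r | P i) F i) = \sum_(i <- r | P i) rho (F i).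
Proof. exact: (big_morph rho rep_add rep_zero). Qed.
Lemma rep_alg a : rho (a%:A) = a%:M.
Proof. by rewrite rep_scale rep_one scalemx1. Qed.

Hypothesis hirr : irreducible_rep rho.

Lemma row_trans (v : 'rV[k]_m) : v != 0 -> forall u, exists r, v *m rho r = u.
Proof.
move=> nzv u.
pose S (x : 'rV[k]_m) := exists r, v *m rho r = x.
have [p [B hB]] : exists p (B : 'M[k]_(p, m)), forall u, S u <-> (u <= B)%MS.
  apply: subspace_mx.
  - by exists 0; rewrite rep_zero mulmx0.
  - by move=> _ _ [r1 <-] [r2 <-]; exists (r1 + r2); rewrite rep_add mulmxDr.
  - by move=> a _ [r <-]; exists (a *: r); rewrite rep_scale scalemxAr.
have inv : forall r, (<<B>>%MS *m rho r <= <<B>>)%MS.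
  move=> r; rewrite genmxE (eqmxMr _ (genmxE _)); apply/row_subP => i; rewrite row_mul.
  have /hB [r' hr'] : (row i B <= B)%MS by exact: row_sub.
  by apply/hB; exists (r' * r); rewrite rep_mul mulmxA hr'.
case: hirr => _ _ /(_ _ inv) [h0|hf].
  have : (v <= B)%MS by apply/hB; exists 1; rewrite rep_one mulmx1.
  move=> hv; have hv' : (v <= <<B>>)%MS by rewrite genmxE.
  have : (v <= (0 : 'M[k]_m))%MS.
    by apply: (submx_trans hv'); case/andP: h0.
  by rewrite submx0 (negbTE nzv).
by apply/hB; apply: submx_full; rewrite -(eq_row_full (genmxE B)).
Qed.

Lemma col_trans (w : 'cV[k]_m) : w != 0 -> forall c, exists r, rho r *m w = c.
Proof.
move=> nzw c.
pose S (x : 'rV[k]_m) := exists r, (rho r *m w)^T = x.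
have [p [B hB]] : exists p (B : 'M[k]_(p, m)), forall u, S u <-> (u <= B)%MS.
  apply: subspace_mx.
  - by exists 0; rewrite rep_zero mul0mx trmx0.
  - by move=> _ _ [r1 <-] [r2 <-]; exists (r1 + r2); rewrite rep_add mulmxDl linearD.
  - by move=> a _ [r <-]; exists (a *: r); rewrite rep_scale -scalemxAl linearZ.
pose A := kermx B^T.
have inv : forall r, (A *m rho r <= A)%MS.
  move=> r; apply/sub_kermxP.
  have hsub : (B *m (rho r)^T <= B)%MS.
    apply/row_subP => i; rewrite row_mul.
    have /hB [r' hr'] : (row i B <= B)%MS by exact: row_sub.
    apply/hB; exists (r * r'); by rewrite rep_mul -hr' -trmx_mul mulmxA.
  case/submxP: hsub => E hE.
  have hc : rho r *m B^T = B^T *m E^T.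
    by rewrite -[rho r]trmxK -trmx_mul hE trmx_mul.
  by rewrite -mulmxA hc mulmxA mulmx_ker mul0mx.
case: hirr => _ _ /(_ _ inv) [h0|hf].
  have : row_free B^T.
    by rewrite -kermx_eq0 -submx0; case/andP: h0.
  rewrite -row_leq_rank mxrank_tr => hr.
  have hfull : row_full B.
    by rewrite /row_full eqn_leq rank_leq_col hr.
  have /hB [r hr2] : (c^T <= B)%MS by apply: submx_full.
  by exists r; apply: trmx_inj; rewrite hr2.
exfalso; move: hf; rewrite /row_full /A mxrank_ker => /eqP h.
have m0 : (0 < m)%N by case: hirr.
have hB0 : \rank B^T = 0%N.
  have := rank_leq_col B^T; move: h; move: (\rank B^T) => q; lia.
move/eqP: hB0; rewrite mxrank_eq0 => /eqP hBT.
have : (w^T <= B)%MS by apply/hB; exists 1; rewrite rep_one mul1mx.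
have -> : B = 0 by rewrite -[B]trmxK hBT trmx0.
move=> hw; have : (w^T <= (0 : 'M[k]_m))%MS by apply: submx_trans hw (sub0mx _ _).
rewrite submx0 => /eqP /(congr1 trmx).
by rewrite trmxK trmx0 => hw2; rewrite hw2 eqxx in nzw.
Qed.

End RepBasics.

Section Burnside.
Variables (k : closedFieldType) (R : algType k) (m : nat) (rho : R -> 'M[k]_m).
Hypothesis hirr : irreducible_rep rho.
Variable I : R -> Prop.
Hypothesis hI : two_sided_ideal I.

Let hrep : representation rho. Proof. by case: hirr. Qed.

Let Lset (A : 'M[k]_m) := exists x, I x /\ rho x = A.

Let L0 : Lset 0.
Proof. by case: hI => I0 _ _ _; exists 0; split=> //; rewrite (rep_zero hrep). Qed.
Let LD A B : Lset A -> Lset B -> Lset (A + B).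
Proof.
case: hI => _ ID _ _ [x [Ix <-]] [y [Iy <-]].
by exists (x + y); split; [apply: ID | rewrite (rep_add hrep)].
Qed.
Let LmulL r A : Lset A -> Lset (rho r *m A).
Proof.
case: hI => _ _ IL _ [x [Ix <-]].
by exists (r * x); split; [apply: IL | rewrite (rep_mul hrep)].
Qed.
Let LmulR r A : Lset A -> Lset (A *m rho r).
Proof.
case: hI => _ _ _ IR [x [Ix <-]].
by exists (x * r); split; [apply: IR | rewrite (rep_mul hrep)].
Qed.
Let LZ a A : Lset A -> Lset (a *: A).
Proof.
move=> LA; have := LmulL (a%:A) LA.
by rewrite (rep_alg hrep) mul_scalar_mx.
Qed.

Lemma rank_one_exists n (T : 'M[k]_m) :
  \rank T = n -> Lset T -> T != 0 -> exists T', Lset T' /\ \rank T' = 1%N.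
Proof.
elim/ltn_ind: n T => n IH T rT LT nzT.
have [r1|r1] := eqVneq n 1%N; first by exists T; rewrite -r1.
have n0 : n != 0%N by rewrite -rT mxrank_eq0.
have [w1 hw1T nzw1] := rowV0Pn nzT.
have nTw1 : ~~ (T <= w1)%MS.
  apply/negP => /mxrankS; rewrite rT rank_rV nzw1 /=; lia.
have [i hi] := row_subPn nTw1.
case/submxP: hw1T => u1 hu1.
have [a ha] := row_trans hrep hirr nzw1 (delta_mx 0 i).
set rb := row_base T.
set M := rho a *m T.
have stab : (rb *m M <= rb)%MS.
  have h1 : (rb *m M <= T)%MS by rewrite /M mulmxA submxMl.
  by apply: (submx_trans h1); rewrite /rb eq_row_base.
set SW := rb *m M *m pinvmx rb.
have [lam hlam] : exists lam, eigenvalue SW lam.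
  have : size (char_poly SW) != 1%N by rewrite size_char_poly rT.
  by case/closed_rootP=> lam hl; exists lam; rewrite eigenvalue_root_char.
case/eigenvalueP: hlam => x hx nzx.
set w := x *m rb.
have hw : w *m M = lam *: w.
  by rewrite /w -mulmxA -(mulmxKpV stab) -/SW mulmxA hx scalemxAl.
set T' := T *m (M - lam%:M).
have LT' : Lset T'.
  have [t [It ht]] := LT.
  rewrite /T' mulmxBr mul_mx_scalar; apply: LD.
    by rewrite /M mulmxA -{2}ht; apply: LmulR; apply: LmulR.
  by rewrite -scaleNr; apply: LZ.
have nzT' : T' != 0.
  apply/eqP => hT0; move/negP: hi; apply.
  have : u1 *m T' = 0 by rewrite hT0 mulmx0.
  rewrite /T' mulmxA -hu1 mulmxBr mul_mx_scalar /M mulmxA ha -rowE.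
  move/eqP; rewrite subr_eq0 => /eqP ->.
  by rewrite scalemx_sub.
have rlt : (\rank T' < n)%N.
  rewrite /T' -rT.
  have -> : \rank (T *m (M - lam%:M)) = \rank (rb *m (M - lam%:M)).
    by rewrite (eqmxMr _ (eq_row_base T)).
  have : ~~ row_free (rb *m (M - lam%:M)).
    apply/negP => /row_free_inj hinj.
    have : x *m (rb *m (M - lam%:M)) = 0 *m (rb *m (M - lam%:M)).
      by rewrite mul0mx mulmxA -/w mulmxBr mul_mx_scalar hw subrr.
    by move/hinj => hx0; rewrite hx0 eqxx in nzx.
  by rewrite -row_leq_rank -ltnNge.
exact: (IH _ rlt T' erefl LT' nzT').
Qed.

Lemma rank_one_full (T : 'M[k]_m) : Lset T -> \rank T = 1%N -> Lset 1%:M.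
Proof.
move=> LT rT.
have nzT : T != 0 by rewrite -mxrank_eq0 rT.
have [b hbT nzb] := rowV0Pn nzT.
have hTb : (T <= b)%MS.
  have := mxrank_leqif_eq hbT; rewrite rT rank_rV nzb /=.
  by case=> _ /esym /andP [].
set c := T *m pinvmx b.
have hTc : T = c *m b by rewrite /c mulmxKpV.
have nzc : c != 0 by apply: contraNneq nzT => hc0; rewrite hTc hc0 mul0mx.
clearbody c.
have hd : forall i, Lset (delta_mx i i).
  move=> i.
  have [a1 ha1] := col_trans hrep hirr nzc (delta_mx i 0).
  have [a2 ha2] := row_trans hrep hirr nzb (delta_mx 0 i).
  have := LmulR a2 (LmulL a1 LT).
  by rewrite hTc !mulmxA ha1 -mulmxA ha2 mul_delta_mx.
rewrite (mx1_sum_delta k m).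
by elim/big_ind: _ => //; exact: LD.
Qed.

Lemma ideal_one : (exists y, I y /\ rho y != 0) -> exists x, I x /\ rho x = 1%:M.
Proof.
case=> y [Iy nzy].
have [T' [LT' rT']] := rank_one_exists erefl (ex_intro _ y (conj Iy erefl)) nzy.
exact: rank_one_full LT' rT'.
Qed.

End Burnside.

Section ColSub.
Variables (k : fieldType) (R : algType k) (m : nat) (rho : R -> 'M[k]_m).
Hypothesis hrep : representation rho.
Hypothesis hirr : irreducible_rep rho.

Lemma col_submod (U : 'cV[k]_m -> Prop) :
  U 0 -> (forall u v, U u -> U v -> U (u + v)) ->
  (forall r u, U u -> U (rho r *m u)) ->
  (forall u, U u -> u = 0) \/ (forall u, U u).
Proof.
move=> U0 UD UM.
have UZ a u : U u -> U (a *: u).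
  by move=> Uu; have := UM (a%:A) u Uu; rewrite (rep_alg hrep) mul_scalar_mx.
pose S (x : 'rV[k]_m) := U x^T.
have [p [B hB]] : exists p (B : 'M[k]_(p, m)), forall u, S u <-> (u <= B)%MS.
  apply: subspace_mx; rewrite /S.
  - by rewrite trmx0.
  - by move=> u v Su Sv; rewrite linearD; apply: UD.
  - by move=> a u Su; rewrite linearZ; apply: UZ.
pose A := kermx B^T.
have inv : forall r, (A *m rho r <= A)%MS.
  move=> r; apply/sub_kermxP.
  have hsub : (B *m (rho r)^T <= B)%MS.
    apply/row_subP => i; rewrite row_mul.
    have /hB hi : (row i B <= B)%MS by exact: row_sub.
    apply/hB; rewrite /S trmx_mul trmxK; exact: UM.
  case/submxP: hsub => E hE.
  have hc : rho r *m B^T = B^T *m E^T.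
    by rewrite -[rho r]trmxK -trmx_mul hE trmx_mul.
  by rewrite -mulmxA hc mulmxA mulmx_ker mul0mx.
case: hirr => _ m0 /(_ _ inv) [h0|hf].
  have : row_free B^T.
    by rewrite -kermx_eq0 -submx0; case/andP: h0.
  rewrite -row_leq_rank mxrank_tr => hr.
  have hfull : row_full B.
    by rewrite /row_full eqn_leq rank_leq_col hr.
  right => u; have /hB : (u^T <= B)%MS by apply: submx_full.
  by rewrite /S trmxK.
left; move: hf; rewrite /row_full /A mxrank_ker => /eqP h.
have hB0 : \rank B^T = 0%N.
  have := rank_leq_col B^T; move: h; move: (\rank B^T) => q; lia.
move/eqP: hB0; rewrite mxrank_eq0 => /eqP hBT.
have hB00 : B = 0 by rewrite -[B]trmxK hBT trmx0.
move=> u Uu; have /hB : S u^T by rewrite /S trmxK.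
move=> hw; have : (u^T <= (0 : 'M[k]_m))%MS.
  by apply: submx_trans hw _; rewrite hB00 sub0mx.
by rewrite submx0 => /eqP /(congr1 trmx); rewrite trmxK trmx0.
Qed.
End ColSub.

Section ColMod.
Variables (k : fieldType) (R : algType k) (m : nat) (rho : R -> 'M[k]_m).
Hypothesis hrep : representation rho.

Definition colmod (h : representation rho) : Type := 'cV[k]_m.
HB.instance Definition _ := GRing.Zmodule.on (colmod hrep).

Definition colscale (r : R) (v : colmod hrep) : colmod hrep := rho r *m (v : 'cV[k]_m).

Lemma colscaleA a b v : colscale a (colscale b v) = colscale (a * b) v.
Proof. by rewrite /colscale (rep_mul hrep) mulmxA. Qed.
Lemma colscale1 : left_id 1 colscale.
Proof. by move=> v; rewrite /colscale (rep_one hrep) mul1mx. Qed.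
Lemma colscaleDr : right_distributive colscale +%R.
Proof. by move=> r u v; rewrite /colscale mulmxDr. Qed.
Lemma colscaleDl v : {morph colscale^~ v: a b / a + b}.
Proof. by move=> a b; rewrite /colscale (rep_add hrep) mulmxDl. Qed.

HB.instance Definition _ := GRing.Zmodule_isLmodule.Build R (colmod hrep)
  colscaleA colscale1 colscaleDr colscaleDl.

Lemma colmod_simple : irreducible_rep rho -> simple_module (colmod hrep).
Proof.
move=> hirr; split.
  have m0 : (0 < m)%N by case: hirr.
  exists (delta_mx (Ordinal m0) 0 : 'cV[k]_m) => /matrixP /(_ (Ordinal m0) 0).
  by rewrite !mxE !eqxx /= => /eqP; rewrite oner_eq0.
move=> U U0 UD UM.
have := @col_submod k R m rho hrep hirr U U0 UD (fun r u Uu => UM r u Uu).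
by [].
Qed.

Lemma colmod_dim d : kdim_le (colmod hrep) d -> (m <= d)%N.
Proof.
case=> v hv.
pose W : 'M[k]_(d, m) := \matrix_(i, j) (v i : 'cV[k]_m) j 0.
have E : forall (r : R) (u : colmod hrep), r *: u = rho r *m (u : 'cV[k]_m) by [].
have hW : forall x : 'cV[k]_m, (x^T <= W)%MS.
  move=> x; have [c hc] := hv x.
  have hx : x = \sum_i c i *: (v i : 'cV[k]_m).
    rewrite [LHS]hc; apply: eq_bigr => i _.
    by rewrite E (rep_alg hrep) mul_scalar_mx.
  rewrite hx linear_sum /=; apply: summx_sub => i _.
  rewrite linearZ /=; apply: scalemx_sub.
  have -> : (v i : 'cV[k]_m)^T = row i W by apply/rowP => j; rewrite !mxE.
  exact: row_sub.
have hfull : row_full W.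
  rewrite -sub1mx; apply/row_subP => j.
  have := hW (row j 1%:M)^T; by rewrite trmxK.
by rewrite -(eqP hfull) rank_leq_row.
Qed.
End ColMod.

Section ModRep.
Variables (k : fieldType) (R : algType k) (V : lmodType R) (d : nat).
Variable v : 'I_d -> V.
Hypothesis hspan : forall x : V, exists c : 'I_d -> k,
    x = \sum_(i < d) ((c i)%:A : R) *: v i.

Definition sc (a : k) (x : V) : V := ((a%:A : R) *: x).

Lemma scDl a b x : sc (a + b) x = sc a x + sc b x.
Proof. by rewrite /sc scalerDl scalerDl. Qed.
Lemma scDr a x y : sc a (x + y) = sc a x + sc a y.
Proof. by rewrite /sc scalerDr. Qed.
Lemma scA a b x : sc a (sc b x) = sc (a * b) x.
Proof. by rewrite /sc scalerA -scalerAl mul1r scalerA. Qed.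
Lemma sc1 x : sc 1 x = x.
Proof. by rewrite /sc scale1r scale1r. Qed.
Lemma sc0 x : sc 0 x = 0.
Proof. by rewrite /sc scale0r scale0r. Qed.
Lemma scx0 a : sc a 0 = 0.
Proof. by rewrite /sc scaler0. Qed.
Lemma sc_r (r : R) a x : r *: sc a x = sc a (r *: x).
Proof. by rewrite /sc !scalerA mulr_algr mulr_algl. Qed.
Lemma sc_sum a (I : Type) (rr : seq I) (F : I -> V) :
  sc a (\sum_(i <- rr) F i) = \sum_(i <- rr) sc a (F i).
Proof. by rewrite /sc scaler_sumr. Qed.
Lemma r_sum (r : R) (I : Type) (rr : seq I) (F : I -> V) :
  r *: (\sum_(i <- rr) F i) = \sum_(i <- rr) r *: (F i).
Proof. by rewrite scaler_sumr. Qed.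

Definition comb (c : 'rV[k]_d) : V := \sum_i sc (c 0 i) (v i).

Lemma combD c1 c2 : comb (c1 + c2) = comb c1 + comb c2.
Proof. by rewrite /comb -big_split; apply: eq_bigr => i _; rewrite mxE scDl. Qed.
Lemma combZ a c : comb (a *: c) = sc a (comb c).
Proof. by rewrite /comb sc_sum; apply: eq_bigr => i _; rewrite mxE scA. Qed.
Lemma comb0 : comb 0 = 0.
Proof. by rewrite /comb big1 // => i _; rewrite mxE sc0. Qed.
Lemma comb_surj x : exists c, comb c = x.
Proof.
have [c hc] := hspan x; exists (\row_i c i); rewrite hc /comb.
by apply: eq_bigr => i _; rewrite mxE.
Qed.

Lemma comb_ker : exists p (K : 'M[k]_(p, d)), forall c, comb c = 0 <-> (c <= K)%MS.
Proof.
apply: subspace_mx; first exact: comb0.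
  by move=> u w hu hw; rewrite combD hu hw addr0.
by move=> a u hu; rewrite combZ hu scx0.
Qed.


Lemma module_rep_exists : simple_module V ->
  exists m (rho : R -> 'M[k]_m), irreducible_rep rho /\
    forall r, (forall x : V, r *: x = 0) <-> rho r = 0.
Proof.
move=> [[x0 nzx0] hsimp].
have [p [K hK]] := comb_ker.
pose Kc := (K^C)%MS.
pose m := \rank Kc.
pose Bq : 'M[k]_(m, d) := row_base Kc.
have Bfree : row_free Bq by exact: row_base_free.
pose bb (e : 'rV[k]_m) := comb (e *m Bq).
have bbD e1 e2 : bb (e1 + e2) = bb e1 + bb e2 by rewrite /bb mulmxDl combD.
have bbZ a e : bb (a *: e) = sc a (bb e) by rewrite /bb -scalemxAl combZ.
have bb0 : bb 0 = 0 by rewrite /bb mul0mx comb0.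
have bbN e : bb (- e) = - bb e.
  by apply: (addrI (bb e)); rewrite -bbD !subrr bb0.
have bb_inj e1 e2 : bb e1 = bb e2 -> e1 = e2.
  move=> h; have h0 : bb (e1 - e2) = 0 by rewrite bbD bbN h subrr.
  have hK0 : ((e1 - e2) *m Bq <= K)%MS by apply/hK.
  have hKc : ((e1 - e2) *m Bq <= Kc)%MS.
    by apply: (submx_trans (submxMl _ _)); rewrite /Bq eq_row_base.
  have : ((e1 - e2) *m Bq <= (K :&: Kc)%MS)%MS by rewrite sub_capmx hK0 hKc.
  rewrite /Kc capmx_compl submx0 => /eqP.
  rewrite -(mul0mx _ Bq) => /(row_free_inj Bfree) /eqP.
  by rewrite subr_eq0 => /eqP.
have bb_surj x : exists e, bb e = x.
  have [c hc] := comb_surj x.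
  have : (c <= K + Kc)%MS by apply: submx_full; exact: addsmx_compl_full.
  case/sub_addsmxP => [[u1 u2]] /= hcu.
  have hu2 : (u2 *m Kc <= Bq)%MS by rewrite /Bq eq_row_base submxMl.
  case/submxP: hu2 => e he; exists e.
  rewrite /bb -he -hc hcu combD.
  have -> : comb (u1 *m K) = 0 by apply/hK; exact: submxMl.
  by rewrite add0r.
pose crd (x : V) : 'rV[k]_m := epsilon (inhabits 0) (fun e => bb e = x).
have crdK x : bb (crd x) = x.
  by rewrite /crd; apply: (epsilon_spec (inhabits 0) (fun e => bb e = x)); apply: bb_surj.
have bbK e : crd (bb e) = e by apply: bb_inj; rewrite crdK.
have crdD x y : crd (x + y) = crd x + crd y.
  by apply: bb_inj; rewrite bbD !crdK.
have crdZ a x : crd (sc a x) = a *: crd x.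
  by apply: bb_inj; rewrite bbZ !crdK.
have crd0 : crd 0 = 0 by rewrite -bb0 bbK.
have crd_sum (F : 'I_m -> V) : crd (\sum_j F j) = \sum_j crd (F j).
  exact: (big_morph crd crdD crd0).
have bb_sum (F : 'I_m -> 'rV[k]_m) : bb (\sum_j F j) = \sum_j bb (F j).
  exact: (big_morph bb bbD bb0).
pose b (j : 'I_m) := bb (delta_mx 0 j).
pose rhoT (r : R) : 'M[k]_m := \matrix_j crd (r *: b j).
have crd_act r x : crd (r *: x) = crd x *m rhoT r.
  rewrite -{1}(crdK x) {1}[crd x]row_sum_delta bb_sum r_sum crd_sum mulmx_sum_row.
  by apply: eq_bigr => j _; rewrite bbZ sc_r crdZ /rhoT rowK.
pose rho (r : R) : 'M[k]_m := (rhoT r)^T.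
have hrep : representation rho.
  split.
  - move=> x y; rewrite /rho -linearD /=; congr (_^T).
    apply/row_matrixP => j; rewrite linearD /= !rowK scalerDl crdD //.
  - move=> x y; rewrite /rho -trmx_mul; congr (_^T).
    apply/row_matrixP => j; rewrite row_mul !rowK -scalerA crd_act //.
  - rewrite /rho -[1%:M]trmx1; congr (_^T).
    apply/row_matrixP => j; rewrite rowK scale1r /b bbK.
    by rewrite rowE mulmx1.
  - move=> a x; rewrite /rho -linearZ /=; congr (_^T).
    apply/row_matrixP => j; rewrite linearZ /= !rowK -mulr_algl -scalerA.
    by rewrite -/(sc a (x *: b j)) crdZ.
exists m, rho; split; last first.
  move=> r; split.
    move=> hr; rewrite /rho; apply/eqP; rewrite -trmx0 (inj_eq trmx_inj); apply/eqP.
    by apply/row_matrixP => j; rewrite rowK hr crd0 row0.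
  move=> hr x; rewrite -[r *: x]crdK crd_act.
  have -> : rhoT r = 0 by rewrite -[rhoT r]trmxK -/(rho r) hr trmx0.
  by rewrite mulmx0 bb0.
split => //.
  have nzc : crd x0 != 0.
    by apply/eqP => h; apply: nzx0; rewrite -[x0]crdK h bb0.
  case: (pickP (fun j => crd x0 0 j != 0)) => [j _|h]; first exact: (leq_ltn_trans (leq0n _) (ltn_ord j)).
  exfalso; move/negP: nzc; apply; apply/eqP/rowP => j.
  by move/negbFE/eqP: (h j) => ->; rewrite mxE.
move=> U hU.
pose Sub (z : V) := U *m (crd z)^T = 0.
have hcrdT r z : (crd (r *: z))^T = rho r *m (crd z)^T by rewrite crd_act trmx_mul.
have S0 : Sub 0 by rewrite /Sub crd0 trmx0 mulmx0.
have SD : forall u w, Sub u -> Sub w -> Sub (u + w).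
  by move=> u w; rewrite /Sub crdD linearD mulmxDr => -> ->; rewrite addr0.
have SM : forall (r : R) z, Sub z -> Sub (r *: z).
  move=> r z; rewrite /Sub hcrdT => hz.
  case/submxP: (hU r) => D hD.
  by rewrite mulmxA hD -mulmxA hz mulmx0.
have [H0|Hall] := hsimp Sub S0 SD SM.
- right.
  have hk : kermx U^T = 0.
    apply/row_matrixP => i; rewrite row0.
    have : (row i (kermx U^T) <= kermx U^T)%MS by exact: row_sub.
    move/sub_kermxP => hw.
    have : Sub (bb (row i (kermx U^T))).
      by rewrite /Sub bbK; apply: trmx_inj; rewrite trmx_mul trmxK trmx0 hw.
    by move/H0 => /(congr1 crd); rewrite bbK crd0.
  have : row_free U^T by rewrite -kermx_eq0 hk.
  by rewrite -row_leq_rank mxrank_tr /row_full eqn_leq rank_leq_col => ->.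
- left.
  have hU0 : U = 0.
    apply/matrixP => i j; rewrite mxE.
    have := Hall (b j); rewrite /Sub /b bbK trmx_delta => /(congr1 (fun M : 'cV[k]_m => M i 0)).
    rewrite mxE (bigD1 j) //= big1 => [|l /negbTE hl]; last by rewrite mxE hl mulr0.
    by rewrite mxE !eqxx mulr1 addr0 mxE.
  by rewrite hU0 !submx_refl.
Qed.

End ModRep.

Section Block.
Variables (K : comNzRingType) (N m : nat).
Hypotheses (m0 : (0 < m)%N) (mN : (m %| N)%N).

Definition en (A : 'M[K]_m) (a b : nat) : K :=
  match (insub a : option 'I_m), (insub b : option 'I_m) with
  | Some x, Some y => A x y | _, _ => 0 end.

Lemma en_ord (A : 'M[K]_m) (a b : 'I_m) : en A a b = A a b.
Proof. by rewrite /en !valK. Qed.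

Definition bd (A : 'M[K]_m) : 'M[K]_N :=
  \matrix_(i < N, j < N) (if (i %/ m == j %/ m)%N then en A (i %% m) (j %% m) else 0).

Lemma sum_block (c : nat) (hc : (c * m < N)%N) (G : nat -> K) :
  \sum_(l < N) (if (l %/ m == c)%N then G (l %% m)%N else 0) = \sum_(t < m) G t.
Proof.
have hcm : (c * m + m <= N)%N.
  case/dvdnP: mN => q hq; move: hc; rewrite hq ltn_mul2r m0 /= => hcq.
  by rewrite -mulSnr leq_mul2r hcq orbT.
rewrite -(big_mkord xpredT (fun l => if (l %/ m == c)%N then G (l %% m)%N else 0)).
rewrite (big_cat_nat (n := c * m)) //=; last by lia.
rewrite (big_cat_nat (n := c * m + m) (m := c * m)) //=; last by lia.
rewrite big1_seq => [|l /andP [_]]; last first.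
  rewrite mem_index_iota => /andP [_ hl].
  have : (l %/ m < c)%N by rewrite ltn_divLR.
  by rewrite ltn_neqAle => /andP [/negbTE -> _].
rewrite [X in _ + (_ + X)]big1_seq => [|l /andP [_]]; last first.
  rewrite mem_index_iota => /andP [hl _].
  have : (c < l %/ m)%N by rewrite -[(c < _)%N]/(c.+1 <= _)%N leq_divRL // mulSnr.
  by rewrite ltn_neqAle eq_sym => /andP [/negbTE -> _].
rewrite add0r addr0.
rewrite -{1}[(c * m)%N]add0n big_addn.
have -> : (c * m + m - c * m = m)%N by lia.
rewrite big_mkord; apply: eq_bigr => t _.
by rewrite addnC divnMDl // modnMDl divn_small // addn0 eqxx modn_small.
Qed.

Lemma en_mod (A : 'M[K]_m) (i j : nat) :
  en A (i %% m) (j %% m) = A (Ordinal (ltn_pmod i m0)) (Ordinal (ltn_pmod j m0)).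
Proof.
by rewrite -(en_ord A (Ordinal (ltn_pmod i m0)) (Ordinal (ltn_pmod j m0))).
Qed.

Lemma bdD A B : bd (A + B) = bd A + bd B.
Proof.
apply/matrixP => i j; rewrite !mxE; case: ifP => _; last by rewrite addr0.
by rewrite !en_mod mxE.
Qed.

Lemma bdZ a A : bd (a *: A) = a *: bd A.
Proof.
apply/matrixP => i j; rewrite !mxE; case: ifP => _; last by rewrite mulr0.
by rewrite !en_mod mxE.
Qed.

Lemma bdM A B : bd (A *m B) = bd A *m bd B.
Proof.
apply/matrixP => i j; rewrite !mxE.
have hc : ((i %/ m) * m < N)%N.
  by apply: (leq_ltn_trans _ (ltn_ord i)); rewrite leq_divM.
case: eqP => hij.
  rewrite (eq_bigr (fun l : 'I_N => if (l %/ m == i %/ m)%N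
      then en A (i %% m) (l %% m) * en B (l %% m) (j %% m) else 0)); last first.
    move=> l _; rewrite !mxE eq_sym; case: eqP => hl; last by rewrite mul0r.
    by rewrite hl hij eqxx.
  rewrite (sum_block hc (fun t => en A (i %% m) t * en B t (j %% m))).
  rewrite en_mod mxE; apply: eq_bigr => t _.
  by rewrite -[(i %% m)%N]/(nat_of_ord (Ordinal (ltn_pmod i m0)))
    -[(j %% m)%N]/(nat_of_ord (Ordinal (ltn_pmod j m0))) !en_ord.
rewrite big1 // => l _; rewrite !mxE.
case: eqP => h1; case: eqP => h2 //; rewrite ?mul0r ?mulr0 //.
by exfalso; apply: hij; rewrite h1 h2.
Qed.

Lemma bd1 : bd 1%:M = 1%:M.
Proof.
apply/matrixP => i j; rewrite !mxE en_mod mxE.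
have E : (i == j) = ((i %/ m == j %/ m)%N &&
    (Ordinal (ltn_pmod i m0) == Ordinal (ltn_pmod j m0))).
  apply/eqP/andP => [->|[/eqP h1 /eqP h2]]; first by split.
  apply: val_inj; rewrite /= (divn_eq i m) (divn_eq j m) h1.
  by move/(congr1 val): h2 => /= ->.
by rewrite E; case: ifP.
Qed.

Lemma bd_inj0 A : (0 < N)%N -> bd A = 0 -> A = 0.
Proof.
move=> N0 h; apply/matrixP => a b.
have mleN : (m <= N)%N by apply: dvdn_leq.
have ha : (a < N)%N by apply: leq_trans (ltn_ord a) mleN.
have hb : (b < N)%N by apply: leq_trans (ltn_ord b) mleN.
move/matrixP: h => /(_ (Ordinal ha) (Ordinal hb)); rewrite !mxE /=.
rewrite !divn_small // eqxx !modn_small // => <-.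
by rewrite en_ord.
Qed.

End Block.

Lemma blockdiag_bd (k : fieldType) (R : algType k) (N m : nat) (m0 : (0 < m)%N)
  (rho : R -> 'M[k]_m) r : blockdiag_rep N rho r = bd N (rho r).
Proof.
apply/matrixP => i j; rewrite !mxE /en.
rewrite (insubT (fun x => x < m)%N (ltn_pmod i m0)) (insubT (fun x => x < m)%N (ltn_pmod j m0)).
by case: ifP.
Qed.

Lemma blockdiag_rep_ok (k : fieldType) (R : algType k) (N m : nat)
  (m0 : (0 < m)%N) (mN : (m %| N)%N) (rho : R -> 'M[k]_m) :
  representation rho -> representation (blockdiag_rep N rho).
Proof.
case=> hD hM h1 hZ; split.
- by move=> x y; rewrite !(blockdiag_bd N m0) hD bdD.
- by move=> x y; rewrite !(blockdiag_bd N m0) hM bdM.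
- by rewrite (blockdiag_bd N m0) h1 bd1.
- by move=> a x; rewrite !(blockdiag_bd N m0) hZ bdZ.
Qed.

Section HM.
Variables (k : comNzRingType) (T : finType) (v : T -> k).

Definition hm_of (mo : cmonom T) : k := \prod_(t : T) v t ^+ (mo t).

Lemma hm_of_mmorph : mmorphism hm_of.
Proof.
split.
  move=> m1 m2; rewrite /hm_of -big_split /=; apply: eq_bigr => t _.
  by rewrite cmM exprD.
by rewrite /hm_of big1 // => t _; rewrite cm1 expr0.
Qed.

HB.instance Definition _ := isMultiplicative.Build (cmonom T) k hm_of hm_of_mmorph.

Lemma hm_ofU t : hm_of (ucm t) = v t.
Proof.
rewrite /hm_of (bigD1 t) //= big1 => [|u hu]; first by rewrite cmUU expr1 mulr1.
by rewrite cmU eq_sym (negbTE hu) expr0.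
Qed.

End HM.

Section Eval.
Variables (k : fieldType) (s N : nat) (f : nat -> FA k s) (R : algType k)
  (X : 'I_s -> R) (sigma : R -> 'M[k]_N).
Hypothesis hsig : representation sigma.

Definition vs (t : 'I_s * 'I_N * 'I_N) : k := sigma (X t.1.1) t.1.2 t.2.
Definition ev (x : Chat k s N) : k := mmap (@idfun k) (hm_of vs) x.

Lemma evD x y : ev (x + y) = ev x + ev y.
Proof. exact: (rmorphD (mmap (@idfun k) (hm_of vs))). Qed.
Lemma evM x y : ev (x * y) = ev x * ev y.
Proof. exact: (rmorphM (mmap (@idfun k) (hm_of vs))). Qed.
Lemma ev1 : ev 1 = 1.
Proof. exact: (rmorph1 (mmap (@idfun k) (hm_of vs))). Qed.
Lemma ev0 : ev 0 = 0.
Proof. exact: (rmorph0 (mmap (@idfun k) (hm_of vs))). Qed.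
Lemma evC c : ev (c%:MP) = c.
Proof. by rewrite /ev mmapC. Qed.
Lemma ev_xhat l i j : ev (xhat k l i j) = sigma (X l) i j.
Proof. by rewrite /ev /xhat mmapU /= mul1r hm_ofU. Qed.

Lemma map_ev_pihat p : map_mx ev (pihat N p) = sigma (alg_eval X p).
Proof.
rewrite /pihat /nceval /alg_eval /nceval.
rewrite (rep_sum hsig).
rewrite (map_mx_sum (mmap (@idfun k) (hm_of vs))).
apply: eq_bigr => w _.
rewrite -mulmxE (map_mxM (mmap (@idfun k) (hm_of vs))).
rewrite (rep_mul hsig) (rep_alg hsig).
congr (_ *m _).
  by apply/matrixP => i j; rewrite !mxE -/(ev _) /ev; case: (i == j); rewrite /= ?mmapC ?rmorph0.
have sM : forall x y, sigma (x * y) = sigma x * sigma y by move=> x y; rewrite (rep_mul hsig).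
have s1 : sigma 1 = 1 by rewrite (rep_one hsig).
have mM : forall A B : 'M[Chat k s N]_N, map_mx (mmap (@idfun k) (hm_of vs)) (A * B) =
   map_mx (mmap (@idfun k) (hm_of vs)) A * map_mx (mmap (@idfun k) (hm_of vs)) B.
  by move=> A B; rewrite -!mulmxE map_mxM.
have m1 : map_mx (mmap (@idfun k) (hm_of vs)) (1 : 'M[Chat k s N]_N) = 1.
  by rewrite -!idmxE map_mx1.
rewrite (big_morph sigma sM s1).
rewrite (big_morph (map_mx (mmap (@idfun k) (hm_of vs))) mM m1).
apply: eq_bigr => l _.
by apply/matrixP => i j; rewrite !mxE -/(ev _) ev_xhat.
Qed.

End Eval.

Section CMap.
Variables (k : fieldType) (s N : nat) (f : nat -> FA k s).

Lemma inC_D a b : inC N f (a + b) = inC N f a + inC N f b.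
Proof. by rewrite /inC !rmorphD. Qed.
Lemma inC_M a b : inC N f (a * b) = inC N f a * inC N f b.
Proof. by rewrite /inC !rmorphM. Qed.
Lemma inC_1 : inC N f 1 = 1.
Proof. by rewrite /inC !rmorph1. Qed.
Lemma inC_0 : inC N f 0 = 0.
Proof. by rewrite /inC !rmorph0. Qed.
Lemma inC_N a : inC N f (- a) = - inC N f a.
Proof. by rewrite /inC !rmorphN. Qed.

Variables (R : algType k) (X : 'I_s -> R) (sigma : R -> 'M[k]_N).
Hypothesis hsig : representation sigma.
Hypothesis hf0 : forall n, alg_eval X (f n) = 0.

Lemma ev_Relb x : Relb f x -> ev X sigma x = 0.
Proof.
rewrite /Relb; case: ifP => _; first by move/eqP => ->; exact: ev0.
move/pboolP => hR; apply: (hR (fun c => ev X sigma c = 0)).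
- exact: ev0.
- by move=> a b ha hb; rewrite evD ha hb addr0.
- by move=> a b hb; rewrite evM hb mulr0.
- move=> n i j.
  have := congr1 (fun M : 'M[k]_N => M i j) (map_ev_pihat X hsig (f n)).
  by rewrite mxE /= => ->; rewrite hf0 (rep_zero hsig) mxE.
Qed.

Definition phiC (c : C N f) : k := ev X sigma (repr c).

Lemma phiC_pi x : phiC (\pi_(C N f) x) = ev X sigma x.
Proof.
have h : (repr (\pi_(C N f) x) - x) \in Relideal N f.
  by rewrite Quotient.idealrBE; apply/eqP; rewrite reprK.
have := ev_Relb h.
rewrite /ev rmorphB /= => /eqP; rewrite subr_eq0 => /eqP.
by rewrite /phiC /ev.
Qed.

Lemma phiC_D a b : phiC (a + b) = phiC a + phiC b.
Proof.
by rewrite -[a]reprK -[b]reprK -rmorphD !phiC_pi evD.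
Qed.
Lemma phiC_M a b : phiC (a * b) = phiC a * phiC b.
Proof.
by rewrite -[a]reprK -[b]reprK -rmorphM !phiC_pi evM.
Qed.
Lemma phiC_1 : phiC 1 = 1.
Proof. by rewrite -(rmorph1 (\pi_(C N f))) phiC_pi ev1. Qed.
Lemma phiC_inC a : phiC (inC N f a) = a.
Proof. by rewrite /inC phiC_pi evC. Qed.

End CMap.

Section MkRM.
Variables (A B : comNzRingType) (h : A -> B).
Hypotheses (hD : forall x y, h (x + y) = h x + h y)
  (hM : forall x y, h (x * y) = h x * h y) (h1 : h 1 = 1).

Definition mkrm (x : A) : B := h x.

Lemma mkrm_zmod : GRing.zmod_morphism mkrm.
Proof.
move=> x y; rewrite /mkrm.
have h0 : h 0 = 0 by apply: (addrI (h 0)); rewrite -hD !addr0.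
have hN z : h (- z) = - h z by apply: (addrI (h z)); rewrite -hD !subrr.
by rewrite hD hN.
Qed.
Lemma mkrm_monoid : GRing.monoid_morphism mkrm.
Proof. by split; [exact: h1 | exact: hM]. Qed.

HB.instance Definition _ := GRing.isZmodMorphism.Build A B mkrm mkrm_zmod.
HB.instance Definition _ := GRing.isMonoidMorphism.Build A B mkrm mkrm_monoid.

Lemma mkrm_det n (M : 'M[A]_n) : \det (map_mx h M) = h (\det M).
Proof. exact: (det_map_mx mkrm M). Qed.
Lemma mkrm0 : h 0 = 0.
Proof. exact: (rmorph0 mkrm). Qed.
Lemma mkrm_sum I (r : seq I) (P : pred I) (F : I -> A) :
  h (\sum_(i <- r | P i) F i) = \sum_(i <- r | P i) h (F i).
Proof. exact: (rmorph_sum mkrm). Qed.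
Lemma map_sum_h n I (r : seq I) (P : pred I) (F : I -> 'M[A]_n) :
  map_mx h (\sum_(i <- r | P i) F i) = \sum_(i <- r | P i) map_mx h (F i).
Proof. exact: (map_mx_sum mkrm). Qed.
Lemma map_mul_h n (M1 M2 : 'M[A]_n) : map_mx h (M1 *m M2) = map_mx h M1 *m map_mx h M2.
Proof. exact: (map_mxM mkrm). Qed.
Lemma map_scalar_h n (a : A) : map_mx h (a%:M : 'M[A]_n) = (h a)%:M.
Proof. exact: (map_scalar_mx mkrm). Qed.
End MkRM.

Lemma delta_sandwich (K : comNzRingType) n (i a b j : 'I_n) (G : 'M[K]_n) :
  delta_mx i a *m G *m delta_mx b j = G a b *: delta_mx i j.
Proof.
rewrite -(mul_delta_mx (0 : 'I_1) i a) -(mul_delta_mx (0 : 'I_1) b j).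
rewrite -!mulmxA (mulmxA (delta_mx 0 a)) (mulmxA _ (delta_mx b 0)).
rewrite -rowE -colE [col b (row a G)]mx11_scalar !mxE.
by rewrite mul_scalar_mx -scalemxAr mul_delta_mx.
Qed.

Section Spec.
Variables (k : fieldType) (s N : nat) (f : nat -> FA k s) (hN : (0 < N)%N).
Variable g : 'M[C N f]_N -> 'M[k]_N.
Hypotheses (gD : forall A B, g (A + B) = g A + g B)
  (gM : forall A B, g (A *m B) = g A *m g B) (g1 : g 1%:M = 1%:M)
  (gZ : forall a A, g (inC N f a *: A) = a *: g A)
  (gI : forall A : 'M[k]_N, g (map_mx (inC N f) A) = A).

Definition psi_of (c : C N f) : k := g (c%:M) (Ordinal hN) (Ordinal hN).
Local Notation psi := psi_of.

Lemma E_delta (a b : 'I_N) : map_mx (inC N f) (delta_mx a b : 'M[k]_N) = delta_mx a b.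
Proof.
apply/matrixP => p q; rewrite !mxE.
by case: (_ && _); [exact: inC_1 | exact: inC_0].
Qed.

Lemma g0 : g 0 = 0.
Proof. by apply: (addrI (g 0)); rewrite -gD !addr0. Qed.

Lemma gsum I (r : seq I) (P : pred I) (F : I -> 'M[C N f]_N) :
  g (\sum_(i <- r | P i) F i) = \sum_(i <- r | P i) g (F i).
Proof. exact: (big_morph g gD g0). Qed.

Lemma gE (a b : 'I_N) : g (delta_mx a b) = delta_mx a b.
Proof. by rewrite -(E_delta a b) gI. Qed.

Lemma g_sand (a b a' b' : 'I_N) (M : 'M[C N f]_N) :
  g (delta_mx a b *m M *m delta_mx a' b') = delta_mx a b *m g M *m delta_mx a' b'.
Proof. by rewrite !gM !gE. Qed.

Lemma g_scalar c : g (c%:M) = (psi c)%:M.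
Proof.
set i0 := Ordinal hN.
have -> : c%:M = \sum_i delta_mx i i0 *m c%:M *m delta_mx i0 i :> 'M[C N f]_N.
  rewrite [LHS]scalar_mx_sum_delta; apply: eq_bigr => i _.
  by rewrite delta_sandwich mxE eqxx mulr1n.
rewrite gsum [RHS]scalar_mx_sum_delta; apply: eq_bigr => i _.
by rewrite g_sand delta_sandwich.
Qed.

Lemma g_scal_delta x (a b : 'I_N) : g (x *: delta_mx a b) = psi x *: delta_mx a b.
Proof. by rewrite -mul_scalar_mx gM g_scalar gE mul_scalar_mx. Qed.

Lemma g_map A : g A = map_mx psi A.
Proof.
rewrite {1}[A]matrix_sum_delta gsum [RHS]matrix_sum_delta.
apply: eq_bigr => a _; rewrite gsum; apply: eq_bigr => b _.
by rewrite g_scal_delta mxE.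
Qed.

Lemma psiD c d : psi (c + d) = psi c + psi d.
Proof.
rewrite /psi_of.
have -> : (c + d)%:M = c%:M + d%:M :> 'M[C N f]_N.
  by apply/matrixP => p q; rewrite !mxE mulrnDl.
by rewrite gD mxE.
Qed.

Lemma psiM c d : psi (c * d) = psi c * psi d.
Proof.
rewrite {1}/psi_of scalar_mxM gM !g_scalar -scalar_mxM mxE eqxx mulr1n.
by [].
Qed.

Lemma psi1 : psi 1 = 1.
Proof. by rewrite /psi_of g1 mxE eqxx. Qed.

Lemma psi_inC a : psi (inC N f a) = a.
Proof.
rewrite /psi_of.
have -> : (inC N f a)%:M = map_mx (inC N f) (a%:M : 'M[k]_N) :> 'M[C N f]_N.
  apply/matrixP => p q; rewrite !mxE.
  by case: (p == q); rewrite /= ?mulr1n ?mulr0n ?inC_0.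
by rewrite (gI (a%:M)) mxE eqxx mulr1n.
Qed.

Lemma g_scalar0 c : g (c%:M) = 0 <-> psi c = 0.
Proof.
rewrite g_scalar; split; last by move=> ->; apply/matrixP => p q; rewrite !mxE mul0rn.
by move/matrixP/(_ (Ordinal hN) (Ordinal hN)); rewrite !mxE eqxx mulr1n.
Qed.

End Spec.

Definition tilde_spec (k : fieldType) (s : nat) (R : algType k) (X : 'I_s -> R)
  (f : nat -> FA k s) (N : nat) (sigma : R -> 'M[k]_N) (g : 'M[C N f]_N -> 'M[k]_N) :=
    (forall A B, g (A + B) = g A + g B) /\
    (forall A B, g (A *m B) = g A *m g B) /\
    g 1%:M = 1%:M /\
    (forall a A, g (inC N f a *: A) = a *: g A) /\
    (forall A : 'M[k]_N, g (map_mx (inC N f) A) = A) /\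
    (forall r, g (piR X f N r) = sigma r).

Section Exist.
Variables (k : fieldType) (s : nat) (R : algType k) (X : 'I_s -> R)
  (f : nat -> FA k s) (N : nat).
Hypothesis hsurj : forall r : R, exists p : FA k s, alg_eval X p = r.
Hypothesis hf0 : forall n, alg_eval X (f n) = 0.
Variable sigma : R -> 'M[k]_N.
Hypothesis hsig : representation sigma.

Local Notation phi := (phiC (f := f) X sigma).

Lemma phi0 : phi 0 = 0.
Proof. by apply: (addrI (phi 0)); rewrite -(phiC_D hsig hf0) !addr0. Qed.

Lemma phi_sum I (r : seq I) (P : pred I) (F : I -> C N f) :
  phi (\sum_(i <- r | P i) F i) = \sum_(i <- r | P i) phi (F i).
Proof. exact: (big_morph phi (phiC_D hsig hf0) phi0). Qed.

Lemma rho_tilde_ok : tilde_spec X sigma (@rho_tilde k s R X f N sigma).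
Proof.
rewrite /rho_tilde.
apply: (epsilon_spec (inhabits (fun _ => 0))).
exists (map_mx phi).
split; [|split; [|split; [|split; [|split]]]].
- by move=> A B; apply/matrixP => i j; rewrite !mxE (phiC_D hsig hf0).
- move=> A B; apply/matrixP => i j; rewrite !mxE phi_sum.
  by apply: eq_bigr => l _; rewrite !mxE (phiC_M hsig hf0).
- apply/matrixP => i j; rewrite !mxE.
  by case: (i == j); rewrite /= ?mulr1n ?mulr0n ?(phiC_1 hsig hf0) ?phi0.
- move=> a A; apply/matrixP => i j; rewrite !mxE (phiC_M hsig hf0).
  by rewrite (phiC_inC hsig hf0).
- by move=> A; apply/matrixP => i j; rewrite !mxE (phiC_inC hsig hf0).
- move=> r; rewrite /piR /pibar.
  set p := epsilon _ _.
  have hp : alg_eval X p = r.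
    by rewrite /p; apply: (epsilon_spec (inhabits 0) (fun p => alg_eval X p = r)).
  rewrite -hp -(map_ev_pihat X hsig p).
  by apply/matrixP => i j; rewrite !mxE (phiC_pi hsig hf0).
Qed.

End Exist.


Section Final.
Variables (k : closedFieldType) (s : nat) (R : algType k) (X : 'I_s -> R)
  (f : nat -> FA k s).
Hypothesis hsurj : forall r : R, exists p : FA k s, alg_eval X p = r.
Hypothesis hf0 : forall n, alg_eval X (f n) = 0.
Variables (d : nat).
Hypothesis hdim : forall V : lmodType R, simple_module V -> kdim_le V d.
Variables (N : nat).
Hypothesis hN : (0 < N)%N.
Hypothesis hNd : forall m : nat, (0 < m)%N -> (m <= d)%N -> (m %| N)%N.

Local Notation CC := (C N f).
Local Notation inCC := (@inC k s N f).

Lemma chosen_ok (P : R -> Prop) : primitive_ideal P ->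
  irreducible_rep (projT2 (chosen_irrep P)) /\
  (forall r, P r <-> projT2 (chosen_irrep P) r = 0).
Proof.
case=> V [hV hP].
have [v hv] := hdim hV.
have [m [rho [hirr hker]]] := module_rep_exists hv hV.
rewrite /chosen_irrep.
apply: (epsilon_spec (inhabits (existT (fun m => R -> 'M[k]_m) 0%N (fun _ => 0)))
  (fun mr => irreducible_rep (projT2 mr) /\ forall r, P r <-> projT2 mr r = 0)).
exists (existT _ m rho) => /=; split => // r.
by rewrite hP hker.
Qed.

Lemma irrep_dvd m (rho : R -> 'M[k]_m) : irreducible_rep rho -> (0 < m)%N /\ (m %| N)%N.
Proof.
move=> hirr; have hrep : representation rho by case: hirr.
have m0 : (0 < m)%N by case: hirr.
split => //; apply: hNd => //.
apply: (colmod_dim (hrep := hrep)); apply: hdim; exact: colmod_simple.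
Qed.

Lemma Psi_char (P : R -> Prop) : primitive_ideal P ->
  exists m (rho : R -> 'M[k]_m) (psi : CC -> k),
  [/\ irreducible_rep rho, (forall r, P r <-> rho r = 0), (0 < m)%N & (m %| N)%N] /\
  [/\ (forall c, @Psi k s R X f N P c <-> @Tsub k s R X f N c /\ psi c = 0),
      (forall x y, psi (x + y) = psi x + psi y),
      (forall x y, psi (x * y) = psi x * psi y),
      psi 1 = 1 &
      [/\ (forall a, psi (inCC a) = a),
          (forall r, map_mx psi (piR X f N r) = blockdiag_rep N rho r) &
          (forall A, rho_tilde X (blockdiag_rep N rho) A = map_mx psi A)]].
Proof.
move=> hP; have [hirr hker] := chosen_ok hP.
set rho := projT2 (chosen_irrep P).
set m := projT1 (chosen_irrep P).
have hrep : representation rho by case: hirr.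
have [m0 mN] := irrep_dvd hirr.
have hsig : representation (blockdiag_rep N rho) := blockdiag_rep_ok m0 mN hrep.
have := rho_tilde_ok (f := f) hsurj hf0 hsig.
set g := rho_tilde X _.
case=> gD [gM [g1 [gZ [gI gpi]]]].
exists m, rho, (psi_of hN g); split; first by [].
split.
- move=> c; rewrite /Psi -/rho -/g; split; case=> h1 h2; split => //.
    by apply/(g_scalar0 hN gD gM gI).
  by apply/(g_scalar0 hN gD gM gI).
- exact: psiD.
- exact: psiM.
- exact: psi1.
split.
- exact: psi_inC.
- by move=> r; rewrite -(g_map hN gD gM gI) gpi.
- by move=> A; rewrite -(g_map hN gD gM gI).
Qed.

Local Notation TS := (@Tsub k s R X f N).

Lemma Tsub_inC a : TS (inCC a).
Proof. by move=> S h _ _ _. Qed.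
Lemma TsubD x y : TS x -> TS y -> TS (x + y).
Proof. by move=> hx hy S h0 hD hM hc; exact: (hD _ _ (hx S h0 hD hM hc) (hy S h0 hD hM hc)). Qed.
Lemma TsubM x y : TS x -> TS y -> TS (x * y).
Proof. by move=> hx hy S h0 hD hM hc; exact: (hM _ _ (hx S h0 hD hM hc) (hy S h0 hD hM hc)). Qed.
Lemma Tsub_coef r i : TS (char_poly (piR X f N r))`_i.
Proof. by move=> S h0 hD hM hc; apply: hc. Qed.
Lemma Tsub0 : TS 0.
Proof. by rewrite -(inC_0 N f); apply: Tsub_inC. Qed.

Lemma maximal_Psi (P : R -> Prop) : primitive_ideal P ->
  @maximal_T k s R X f N (@Psi k s R X f N P).
Proof.
move=> hP.
have [m [rho [psi [[hirr hker m0 mN] [hPsi hD hM h1 [hinC hpi hmap]]]]]] := Psi_char hP.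
have psi0 : psi 0 = 0 by apply: (addrI (psi 0)); rewrite -hD !addr0.
split.
- split.
  + by move=> c /hPsi [].
  + by apply/hPsi; split; [exact: Tsub0 | exact: psi0].
  + move=> x y /hPsi [tx px] /hPsi [ty py]; apply/hPsi; split; first exact: TsubD.
    by rewrite hD px py addr0.
  + move=> t c ht /hPsi [tc pc]; apply/hPsi; split; first exact: TsubM.
    by rewrite hM pc mulr0.
- by move/hPsi => [_]; rewrite h1 => /eqP; rewrite oner_eq0.
move=> m' [hm'T hm'0 hm'D hm'M] hsub hn1 c hc.
have tc := hm'T c hc.
set a := psi c.
have h1' : @Psi k s R X f N P (c + inCC (- a)).
  apply/hPsi; split; first by apply: TsubD => //; exact: Tsub_inC.
  by rewrite hD hinC addrN.
have h2 := hsub _ h1'.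
have h3 := hm'M _ _ (Tsub_inC (-1)) h2.
have h4 := hm'D _ _ hc h3.
have e : c + inCC (-1) * (c + inCC (- a)) = inCC a.
  by rewrite inC_N inC_1 mulN1r opprD addrA subrr add0r inC_N opprK.
rewrite e in h4.
have ha : a = 0.
  case: (eqVneq a 0) => // nz; exfalso; apply: hn1.
  by have := hm'M _ _ (Tsub_inC (a^-1)) h4; rewrite -inC_M mulVf // inC_1.
by apply/hPsi; split.
Qed.

Variable I : R -> Prop.
Hypothesis hI : two_sided_ideal I.

Lemma easy_dir (P : R -> Prop) : primitive_ideal P -> (forall r, I r -> P r) ->
  forall c, @Jof k s R X f N I c -> @Psi k s R X f N P c.
Proof.
move=> hP hIP c [tc [n [a [x [b [hx hc]]]]]].
have [m [rho [psi [[hirr hker m0 mN] [hPsi hD hM h1 [hinC hpi hmap]]]]]] := Psi_char hP.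
apply/hPsi; split => //.
have := congr1 (map_mx psi) hc.
rewrite (map_scalar_h hD hM h1) (map_sum_h hD) big1 => [|i _]; last first.
  rewrite !(map_mul_h hD hM h1) hpi (blockdiag_bd N m0).
  have -> : rho (x i) = 0 by apply/hker; apply: hIP.
  have -> : bd N (0 : 'M[k]_m) = 0.
    by rewrite -(scale0r (0 : 'M[k]_m)) bdZ // scale0r.
  by rewrite mulmx0 mul0mx.
move/matrixP/(_ (Ordinal hN) (Ordinal hN)); rewrite !mxE eqxx mulr1n.
by [].
Qed.

Lemma hard_dir (P : R -> Prop) : primitive_ideal P -> ~ (forall r, I r -> P r) ->
  exists c, @Jof k s R X f N I c /\ ~ @Psi k s R X f N P c.
Proof.
move=> hP hnIP.
have [m [rho [psi [[hirr hker m0 mN] [hPsi hD hM h1 [hinC hpi hmap]]]]]] := Psi_char hP.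
have [y [Iy nPy]] : exists y, I y /\ ~ P y.
  apply: NNPP => h; apply: hnIP => r Ir; apply: NNPP => nP; apply: h; exists r.
  by split.
have nz : rho y != 0 by apply/eqP => h0; apply: nPy; apply/hker.
have [x [Ix hx1]] := ideal_one hirr hI (ex_intro _ y (conj Iy nz)).
set A := piR X f N x.
exists (\det A); split.
  split.
    have e : \det A = inCC ((-1) ^+ N) * (char_poly A)`_0.
      rewrite char_poly_det /inC !rmorphXn !rmorphN1 mulrA -exprMn mulrNN mulr1.
      by rewrite expr1n mul1r.
    by rewrite e; apply: TsubM; [exact: Tsub_inC | exact: Tsub_coef].
  exists 1%N, (fun _ => 1%:M), (fun _ => x), (fun _ => \adj A); split => //.
  by rewrite big_ord1 mul1mx mul_mx_adj.
move/hPsi => [_ hc].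
have := esym (mkrm_det hD hM h1 A).
rewrite hpi (blockdiag_bd N m0) hx1 bd1 // det1 hc => /eqP.
by rewrite eq_sym oner_eq0.
Qed.

Lemma main_all :
  (forall m : C N f -> Prop,
     (exists P, V_R I P /\ @Psi k s R X f N P = m) <->
     (@image_Psi k s R X f N m /\ @V_T k s R X f N (@Jof k s R X f N I) m)) /\
  (forall m : C N f -> Prop,
     (exists P, W_R I P /\ @Psi k s R X f N P = m) <->
     (@image_Psi k s R X f N m /\ @W_T k s R X f N (@Jof k s R X f N I) m)).
Proof.
split=> m; split.
- case=> P [[hP hIP] <-]; split; first by exists P.
  split; first exact: maximal_Psi.
  exact: easy_dir.
- case=> [[P [hP <-]] [_ hJ]]; exists P; split => //; split => //.
  apply: NNPP => hn.
  have [c [hc hnc]] := hard_dir hP hn.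
  by apply: hnc; apply: hJ.
- case=> P [[hP hnIP] <-]; split; first by exists P.
  split; first exact: maximal_Psi.
  move=> hJ; have [c [hc hnc]] := hard_dir hP hnIP.
  by apply: hnc; apply: hJ.
- case=> [[P [hP <-]] [_ hnJ]]; exists P; split => //; split => //.
  move=> hIP; apply: hnJ; exact: easy_dir.
Qed.

End Final.

Theorem proposition4p2
  (k : closedFieldType) (s : nat) (R : algType k) (X : 'I_s -> R)
  (f : nat -> FA k s)
  (* R = k{X_1..X_s} / <f_1, f_2, ...>, X_l the image of \hat X_l *)
  (hsurj : forall r : R, exists p : FA k s, alg_eval X p = r)
  (hker : forall p : FA k s, alg_eval X p = 0 <->
     exists n (a b : 'I_n -> FA k s) (j : 'I_n -> nat),
       p = \sum_(i < n) a i * f (j i) * b i)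
  (hPI : is_PI R)
  (d : nat) (hd : (0 < d)%N)
  (hdim : forall V : lmodType R, simple_module V -> kdim_le V d)
  (N : nat) (hN : (0 < N)%N)
  (hNd : forall m : nat, (0 < m)%N -> (m <= d)%N -> (m %| N)%N)
  (I : R -> Prop) (hI : two_sided_ideal I) :
  (forall m : C N f -> Prop,
     (exists P, V_R I P /\ @Psi k s R X f N P = m) <->
     (@image_Psi k s R X f N m /\ @V_T k s R X f N (@Jof k s R X f N I) m)) /\
  (forall m : C N f -> Prop,
     (exists P, W_R I P /\ @Psi k s R X f N P = m) <->
     (@image_Psi k s R X f N m /\ @W_T k s R X f N (@Jof k s R X f N I) m)).
Proof.
have hf0 : forall n, alg_eval X (f n) = 0.
  move=> n; apply/hker; exists 1%N, (fun _ => 1), (fun _ => 1), (fun _ => n).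
  by rewrite big_ord1 mul1r mulr1.
exact: (main_all hsurj hf0 hdim hN hNd hI).
Qed.
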